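(* Let $p\ge1$ be an integer, $x_1,\dots,x_p\in\mathbb{R}_{\ge0}$, $\epsilon\in(0,1]$, and $\delta>0$ with $\delta\le\frac{\max_{i\in[p]}x_i}{4\epsilon^{-1}\log(2p\epsilon^{-1})}$. Let $x'_1,\dots,x'_p\in\mathbb{R}_{\ge0}$ satisfy $x_i\le x'_i\le x_i+\delta$ for all $i\in[p]$. Then $\mathrm{TV}\big(\mathrm{softargmax}^\epsilon_{i\in[p]}x_i,\ \mathrm{softargmax}^\epsilon_{i\in[p]}x'_i\big)\le\frac{10\epsilon^{-1}\log(2p\epsilon^{-1})\delta}{\max_{i\in[p]}x_i}$.
   Context: Softmax: if $\max_i x_i=0$, $\mathrm{softargmax}^\epsilon_{i\in[p]}x_i$ is an arbitrary index $i$ with $x_i=0$. Otherwise, sample $\bm c$ uniformly from $\big[\frac{2\epsilon^{-1}\log(2p\epsilon^{-1})}{\max_i x_i},\frac{4\epsilon^{-1}\log(2p\epsilon^{-1})}{\max_i x_i}\big]$, then sample $\bm i^*\in[p]$ with $\Pr[\bm i^*=i\mid\bm c]=\exp(\bm c x_i)/\sum_{i'\in[p]}\exp(\bm c x_{i'})$, and set $\mathrm{softargmax}^\epsilon_{i\in[p]}x_i=\bm i^*$ (the same procedure applied to $x'_1,\dots,x'_p$ defines $\mathrm{softargmax}^\epsilon_{i\in[p]}x'_i$). $\log$ is natural. The total variation distance of random variables $\bm X,\bm X'$ is $\mathrm{TV}(\bm X,\bm X')=\inf_{\mathcal D}\Pr_{(X,X')\sim\mathcal D}[X\neq X']$ over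 couplings $\mathcal D$. *)

(* Defs.v *)
From HB Require Import structures.
From mathcomp Require Import all_boot all_order all_algebra.
From mathcomp Require Import all_classical all_reals all_analysis.
Set Implicit Arguments. Unset Strict Implicit. Unset Printing Implicit Defensive.
Import Order.TTheory GRing.Theory Num.Theory.
Import numFieldNormedType.Exports.
Local Open Scope classical_set_scope.
Local Open Scope ring_scope.

(* max_{i in [p]} x_i ; the x_i are nonnegative in all uses, base 0 *)
Definition maxx (R : realType) (p : nat) (x : 'I_p -> R) : R :=
  \big[Num.max/0]_(i < p) x i.

Definition sa_L (R : realType) (p : nat) (eps : R) : R :=
  eps^-1 * ln (2 * p%:R * eps^-1).

(* Probability mass function of softargmax^eps_{i in [p]} x_i :
   c uniform on [2L/M, 4L/M], then i* = i with prob exp(c x_i)/sum exp(c x_j).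
   If M = 0 ("arbitrary index with x_i = 0"), we pick index 0 (all x_i = 0
   for nonnegative x). *)
Definition softargmax_pmf (R : realType) (p : nat) (eps : R)
    (x : 'I_p -> R) (i : 'I_p) : R :=
  let M := maxx x in
  if M == 0 then (if val i == 0%N then 1 else 0)
  else
    let a := 2 * sa_L p eps / M in
    let b := 4 * sa_L p eps / M in
    (b - a)^-1 *
      \int[lebesgue_measure]_(c in `[a, b]%classic)
         (expR (c * x i) / \sum_(j < p) expR (c * x j)).

Definition is_coupling (R : realType) (p : nat) (P Q : 'I_p -> R)
    (D : 'I_p -> 'I_p -> R) : Prop :=
  (forall i j, 0 <= D i j) /\
  (forall i, \sum_(j < p) D i j = P i) /\
  (forall j, \sum_(i < p) D i j = Q j).

Definition TV (R : realType) (p : nat) (P Q : 'I_p -> R) : R :=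
  inf [set r : R | exists D, is_coupling P Q D /\
        r = \sum_(i < p) \sum_(j < p) (if i != j then D i j else 0)].

(* Main.v *)
Require Import Defs.
From HB Require Import structures.
From mathcomp Require Import all_boot all_order all_algebra.
From mathcomp Require Import all_classical all_reals all_analysis.
From mathcomp Require Import ring lra.
Import Order.TTheory GRing.Theory Num.Theory.
Import numFieldNormedType.Exports.
Local Open Scope classical_set_scope.
Local Open Scope ring_scope.

Section S.
Context {R : realType} {p : nat}.
Implicit Types (x : 'I_p -> R).

Definition sm x i (c : R) : R := expR (c * x i) / \sum_(j < p) expR (c * x j).

Lemma sumexp_gt0 x c : (0 < p)%N -> 0 < \sum_(j < p) expR (c * x j).
Proof.
move=> p0; rewrite (bigD1 (Ordinal p0)) //=.
by rewrite ltr_wpDr ?expR_gt0 // sumr_ge0 // => j _; rewrite ltW ?expR_gt0.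
Qed.

Lemma sm_ge0 x i c : 0 <= sm x i c.
Proof. by rewrite /sm divr_ge0 // ?sumr_ge0 // => *; rewrite ltW ?expR_gt0. Qed.

Lemma sm_sum1 x c : (0 < p)%N -> \sum_(i < p) sm x i c = 1.
Proof.
move=> p0; rewrite /sm -mulr_suml divff //.
by rewrite gt_eqF // sumexp_gt0.
Qed.

Lemma cont_expl (a : R) : continuous (fun c : R => expR (c * a)).
Proof.
move=> c; apply: continuous_comp; last exact: continuous_expR.
by apply: cvgMr_tmp; exact: cvg_id.
Qed.

Lemma cont_sumexp x (s : seq 'I_p) : continuous (fun c : R => \sum_(j <- s) expR (c * x j)).
Proof.
elim: s => [|j s IH].
  have -> : (fun c : R => \sum_(j <- [::]) expR (c * x j)) = fun=> 0.
    by apply/funext=> c; rewrite big_nil.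
  exact: cst_continuous.
have -> : (fun c : R => \sum_(k <- j :: s) expR (c * x k)) =
   (fun c => expR (c * x j) + \sum_(k <- s) expR (c * x k)).
  by apply/funext=> c; rewrite big_cons.
move=> c; apply: cvgD; [exact: cont_expl|exact: IH].
Qed.

Lemma sm_cont x i : (0 < p)%N -> continuous (sm x i).
Proof.
move=> p0 c; rewrite /sm; apply: cvgM; first exact: cont_expl.
apply: cvgV; first by rewrite gt_eqF // sumexp_gt0.
exact: cont_sumexp.
Qed.


Local Notation mu := (@lebesgue_measure R).

Lemma sm_int x i (u v : R) (I : interval R) : (0 < p)%N ->
  [set` I] `<=` `[u, v] -> mu.-integrable [set` I] (EFin \o sm x i).
Proof.
move=> p0 DS; have hmD := measurable_itv I; have H := (@integrableS _ _ _ mu `[u, v] [set` I] (EFin \o sm x i) _ hmD DS).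
apply: H; first exact: measurable_itv.
apply: continuous_compact_integrable; first exact: segment_compact.
by apply: continuous_subspaceT; exact: sm_cont.
Qed.

Lemma sm_intc x i (u v : R) : (0 < p)%N ->
  mu.-integrable `[u, v] (EFin \o sm x i).
Proof. by move=> p0; apply: (@sm_int x i u v) => //. Qed.

Lemma Rint_sum (I : interval R) (s : seq 'I_p) (F : 'I_p -> R -> R) :
  let D := [set` I] in
  (forall i, mu.-integrable D (EFin \o F i)) ->
  \int[mu]_(c in D) (\sum_(i <- s) F i c) = \sum_(i <- s) \int[mu]_(c in D) F i c.
Proof.
move=> D hF; have hmD := measurable_itv I; elim: s => [|j s IH].
  rewrite big_nil; under eq_Rintegral do rewrite big_nil.
  by rewrite Rintegral_cst // mul0r.
rewrite big_cons -IH; under eq_Rintegral do rewrite big_cons.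
rewrite RintegralD //.
have := @integrable_sum _ _ _ (@lebesgue_measure R) D hmD _ s xpredT (fun i => EFin \o F i) (fun i _ => hF i).
apply: eq_integrable => // c _; by rewrite /= sumEFin.
Qed.


Lemma mu_itv_fine (u v : R) b1 b2 : u <= v ->
  fine (mu [set` Interval (BSide b1 u) (BSide b2 v)]) = v - u.
Proof.
move=> uv; rewrite lebesgue_measure_itv /=.
case: ifP => [_|] //=.
rewrite lte_fin => /negbT; rewrite -leNgt => vu.
have vu2 : v = u by apply/eqP; rewrite eq_le vu uv.
by rewrite vu2 subrr.
Qed.

Lemma sm_intsum x (I : interval R) u v : (0 < p)%N -> [set` I] `<=` `[u, v] ->
  \sum_(i < p) \int[mu]_(c in [set` I]) sm x i c = fine (mu [set` I]).
Proof.
move=> p0 IS; rewrite -Rint_sum; last by move=> i; exact: sm_int p0 IS.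
under eq_Rintegral do rewrite sm_sum1 //.
by rewrite Rintegral_cst ?mul1r //; exact: measurable_itv.
Qed.


Definition avg x (a : R) i := a^-1 * \int[mu]_(c in `[a, 2 * a]) sm x i c.

Lemma avg_ge0 x a i : 0 <= a -> 0 <= avg x a i.
Proof.
move=> a0; rewrite /avg mulr_ge0 ?invr_ge0 //.
by apply: Rintegral_ge0 => c _; exact: sm_ge0.
Qed.

Lemma avg_sum x a : (0 < p)%N -> 0 < a -> \sum_(i < p) avg x a i = 1.
Proof.
move=> p0 a0; rewrite /avg -mulr_sumr (@sm_intsum x _ a (2 * a)) //.
rewrite mu_itv_fine; last by rewrite ler_peMl ?ltW // ltr1n.
by rewrite mulr_natl mulr2n addrK mulVf // gt_eqF.
Qed.

Lemma sm_lower x x' d i c : (0 < p)%N -> 0 <= c ->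
  (forall j, x j <= x' j) -> (forall j, x' j <= x j + d) ->
  (1 - c * d) * sm x i c <= sm x' i c.
Proof.
move=> p0 c0 h1 h2.
apply: (@le_trans _ _ ((expR (c * d))^-1 * sm x i c)).
  apply: ler_wpM2r; first exact: sm_ge0.
  by rewrite -expRN; exact: expR_ge1Dx.
rewrite /sm mulrCA -invfM.
apply: ler_pM; first by rewrite ltW ?expR_gt0.
- by rewrite invr_ge0 mulr_ge0 // ?ltW ?expR_gt0 ?sumexp_gt0.
- by rewrite ler_expR ler_wpM2l.
rewrite lef_pV2 ?posrE ?mulr_gt0 ?expR_gt0 ?sumexp_gt0 //.
rewrite mulr_sumr; apply: ler_sum => j _.
by rewrite -expRD ler_expR addrC -mulrDr ler_wpM2l.
Qed.


Lemma cont_int (f : R -> R) (u v : R) (I : interval R) : continuous f ->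
  [set` I] `<=` `[u, v] -> mu.-integrable [set` I] (EFin \o f).
Proof.
move=> fc DS; have hmD := measurable_itv I.
have H := (@integrableS _ _ _ mu `[u, v] [set` I] (EFin \o f) _ hmD DS).
apply: H; first exact: measurable_itv.
apply: continuous_compact_integrable; first exact: segment_compact.
exact: continuous_subspaceT.
Qed.

Lemma avg_term1 x x' d a i : (0 < p)%N -> 0 < a -> 0 <= d ->
  (forall j, x j <= x' j) -> (forall j, x' j <= x j + d) ->
  avg x a i - avg x' a i <= 2 * a * d * avg x a i.
Proof.
move=> p0 a0 d0 h1 h2; rewrite /avg.
set F := \int[mu]_(c in _) sm x i c; set G := \int[mu]_(c in _) sm x' i c.
have H : (1 - 2 * a * d) * F <= G.
  rewrite /F -RintegralZl; first last.
  - exact: sm_intc.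
  - exact: measurable_itv.
  apply: le_Rintegral.
  - exact: measurable_itv.
  - apply: (@cont_int _ a (2 * a)) => //.
    by move=> c; apply: cvgMl_tmp; exact: sm_cont.
  - exact: sm_intc.
  move=> c /=; rewrite in_itv /= => /andP[ac c2a].
  have c0 : 0 <= c by rewrite (le_trans _ ac) ?ltW.
  apply: le_trans (@sm_lower x x' d i c p0 c0 h1 h2).
  apply: ler_wpM2r; first exact: sm_ge0.
  by rewrite lerB // ler_wpM2r.
rewrite mulrCA -mulrBr; apply: ler_wpM2l; first by rewrite invr_ge0 ltW.
move: H; rewrite mulrBl mul1r; lra.
Qed.


Lemma avg_term2 x a a' i : (0 < p)%N -> 0 < a' -> a' <= a -> a <= 2 * a' ->
  avg x a i - avg x a' i <= a^-1 * \int[mu]_(c in `]2 * a', 2 * a]) sm x i c.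
Proof.
move=> p0 a'0 aa' a2a'; rewrite /avg.
have a0 : 0 < a by apply: lt_le_trans aa'.
have E1 : \int[mu]_(c in `[a, 2 * a]) sm x i c - \int[mu]_(c in `[a, 2 * a']) sm x i c
    = \int[mu]_(c in `]2 * a', 2 * a]) sm x i c.
  apply: Rintegral_itvB; first exact: sm_intc.
    by rewrite bnd_simp.
  by rewrite bnd_simp ler_wpM2l.
have E2 : \int[mu]_(c in `[a', 2 * a']) sm x i c - \int[mu]_(c in `[a', a]) sm x i c
    = \int[mu]_(c in `[a, 2 * a']) sm x i c.
  rewrite Rintegral_itvB; first last.
  - by rewrite bnd_simp.
  - by rewrite bnd_simp.
  - exact: sm_intc.
  apply: Rintegral_itv_obnd_cbnd.
  apply: (@sm_int x i a (2 * a')) => // c /=; rewrite !in_itv /= => /andP[h1 h2].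
  by rewrite h2 ltW.
have Z : 0 <= \int[mu]_(c in `[a', a]) sm x i c.
  by apply: Rintegral_ge0 => c _; exact: sm_ge0.
have D0 : 0 <= \int[mu]_(c in `[a', 2 * a']) sm x i c.
  by apply: Rintegral_ge0 => c _; exact: sm_ge0.
have K : a^-1 * \int[mu]_(c in `[a', 2 * a']) sm x i c <=
         a'^-1 * \int[mu]_(c in `[a', 2 * a']) sm x i c.
  by apply: ler_wpM2r => //; rewrite lef_pV2 ?posrE.
have ia0 : 0 <= a^-1 by rewrite invr_ge0 ltW.
move: E1 E2 Z D0 K ia0.
set A := \int[mu]_(c in `[a, 2 * a]) _.
set B := \int[mu]_(c in `]2 * a', 2 * a]) _.
set C := \int[mu]_(c in `[a, 2 * a']) _.
set Dd := \int[mu]_(c in `[a', 2 * a']) _.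
set Zz := \int[mu]_(c in `[a', a]) _.
set ia := a^-1; set ia' := a'^-1.
move=> E1 E2 Z D0 K ia0.
have -> : A = C + B by rewrite -E1; ring.
have : Dd = Zz + C by rewrite -E2; ring.
move=> E3; rewrite E3 in K.
have : 0 <= ia * Zz by rewrite mulr_ge0.
move: K; rewrite E3 !mulrDr; lra.
Qed.


Lemma maxx_ge x i : x i <= maxx x.
Proof.
rewrite /maxx; elim: (index_enum _) (mem_index_enum i) => [//|j s IH].
rewrite in_cons big_cons le_max => /orP[/eqP ->|/IH ->]; first by rewrite lexx.
by rewrite orbT.
Qed.

Lemma maxx_le x c : (forall i, x i <= c) -> 0 <= c -> maxx x <= c.
Proof.
move=> H c0; rewrite /maxx; apply: (big_ind (fun u => u <= c)) => //.
by move=> u v hu hv; rewrite ge_max hu hv.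
Qed.

Lemma maxx_ge0 x : (forall i, 0 <= x i) -> 0 <= maxx x.
Proof.
move=> H; rewrite /maxx; apply: (big_ind (fun u => 0 <= u)) => //.
by move=> u v hu hv; rewrite le_max hu.
Qed.

Lemma sumI2 x a a' : (0 < p)%N -> 0 < a' -> a' <= a ->
  \sum_(i < p) (a^-1 * \int[mu]_(c in `]2 * a', 2 * a]) sm x i c) =
  a^-1 * (2 * a - 2 * a').
Proof.
move=> p0 a'0 aa'; rewrite -mulr_sumr (@sm_intsum x _ (2 * a') (2 * a)) //.
  by rewrite mu_itv_fine // ler_wpM2l.
by move=> c /=; rewrite !in_itv /= => /andP[h1 h2]; rewrite h2 ltW.
Qed.

Lemma pmf_avg x eps : 0 < maxx x -> 0 < sa_L p eps ->
  forall i, softargmax_pmf eps x i = avg x (2 * sa_L p eps / maxx x) i.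
Proof.
move=> M0 L0 i; rewrite /softargmax_pmf /= gt_eqF //.
set L := sa_L p eps; set M := maxx x.
have -> : 4 * L / M = 2 * (2 * L / M) by ring.
have -> : 2 * (2 * L / M) - 2 * L / M = 2 * L / M by ring.
by [].
Qed.

Lemma L_ge (eps : R) : (0 < p)%N -> 0 < eps -> eps <= 1 -> 1 / 2 <= sa_L p eps.
Proof.
move=> p0 e0 e1; rewrite /sa_L.
set t := 2 * p%:R * eps^-1.
have t2 : 2 <= t.
  have hp : 1 <= p%:R :> R by rewrite ler1n.
  have he : 1 <= eps^-1 by rewrite invf_ge1.
  rewrite /t; nra.
have t0 : 0 < t by apply: lt_le_trans t2.
have lt : 1 - t^-1 <= ln t.
  have := expR_ge1Dx (- ln t); rewrite expRN lnK ?posrE //; lra.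
have : t^-1 <= 2^-1 by rewrite lef_pV2 ?posrE.
have ie : 1 <= eps^-1 by rewrite invf_ge1.
have lg0 : 0 <= ln t by apply: ln_ge0; apply: le_trans t2; rewrite ler1n.
move=> h; apply: (@le_trans _ _ (ln t)); first lra.
by rewrite ler_peMl.
Qed.

End S.

Section C.
Context {R : realType} {p : nat}.

Lemma TV_le (P Q : 'I_p -> R) :
  (forall i, 0 <= P i) -> (forall i, 0 <= Q i) ->
  \sum_(i < p) P i = \sum_(i < p) Q i ->
  TV P Q <= \sum_(i < p) (P i - Num.min (P i) (Q i)).
Proof.
move=> P0 Q0 PQ.
set m := fun i => Num.min (P i) (Q i).
set s := \sum_(i < p) (P i - m i).
have Pm i : 0 <= P i - m i by rewrite subr_ge0 /m ge_min lexx.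
have Qm i : 0 <= Q i - m i by rewrite subr_ge0 /m ge_min lexx orbT.
have sQ : \sum_(i < p) (Q i - m i) = s.
  by rewrite /s !sumrB PQ.
have s0 : 0 <= s by rewrite sumr_ge0.
have key (u : 'I_p -> R) : (forall i, 0 <= u i) -> \sum_(i < p) u i = s ->
    forall i, u i * s / s = u i.
  move=> u0 us i; have [s00|sn0] := eqVneq s 0; last by rewrite mulfK.
  rewrite s00 in us *; move/eqP: us; rewrite psumr_eq0 => [/allP H|j _]; last exact: u0.
  by have /eqP -> := H i (mem_index_enum i); rewrite !mul0r.
pose D i j := (if i == j then m i else 0) + (P i - m i) * (Q j - m j) / s.
have D0 i j : 0 <= D i j.
  rewrite /D addr_ge0 // ?divr_ge0 ?mulr_ge0 //.
  by case: eqP => _ //; rewrite /m le_min P0 Q0.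
have cpl : is_coupling P Q D.
  split; first exact: D0.
  split.
    move=> i; rewrite /D big_split /= -big_mkcond /=.
    rewrite (big_pred1 i); last by move=> k; rewrite /= eq_sym.
    rewrite -mulr_suml -mulr_sumr sQ (key (fun k => P k - m k)) //.
    by rewrite addrC subrK.
  move=> j; rewrite /D big_split /=.
  rewrite -big_mkcond /= big_pred1_eq.
  rewrite -mulr_suml -mulr_suml.
  rewrite -/s [s * _]mulrC.
  by rewrite (key (fun k => Q k - m k)) // addrC subrK.
have H : lbound [set r : R | exists D, is_coupling P Q D /\
        r = \sum_(i < p) \sum_(j < p) (if i != j then D i j else 0)] (TV P Q).
  apply: ge_inf; exists 0 => r [D' [[D'0 _] ->]].
  by rewrite sumr_ge0 // => i _; rewrite sumr_ge0 // => j _; case: ifP.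
apply: le_trans (H _ (ex_intro _ D (conj cpl erefl))) _.
apply: le_trans (_ : \sum_(i < p) \sum_(j < p) ((P i - m i) * (Q j - m j) / s) <= _).
  apply: ler_sum => i _; apply: ler_sum => j _.
  case: eqP => [_|/eqP ij]; first by rewrite divr_ge0 ?mulr_ge0.
  by rewrite /D (negbTE ij) add0r.
under eq_bigr do rewrite -mulr_suml -mulr_sumr sQ.
rewrite -mulr_suml -/s.
rewrite -mulr_suml -/s.
have [->|sn0] := eqVneq s 0; first by rewrite mulr0 mul0r.
by rewrite mulfK.
Qed.

End C.

Theorem mainTheorem9 (R : realType) (p : nat) (x x' : 'I_p -> R) (eps delta : R) :
  (1 <= p)%N ->
  (forall i, 0 <= x i) ->
  0 < eps -> eps <= 1 ->
  0 < delta ->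
  delta <= maxx x / (4 * sa_L p eps) ->
  (forall i, 0 <= x' i) ->
  (forall i, x i <= x' i /\ x' i <= x i + delta) ->
  TV (softargmax_pmf eps x) (softargmax_pmf eps x') <=
    10 * sa_L p eps * delta / maxx x.
Proof.
move=> p0 x0 e0 e1 d0 dM x'0 hx.
have h1 j : x j <= x' j by case: (hx j).
have h2 j : x' j <= x j + delta by case: (hx j).
have hL := @L_ge R p eps p0 e0 e1.
set L := sa_L p eps in dM hL *.
set M := maxx x in dM *.
set M' := maxx x'.
have L0 : 0 < L by apply: lt_le_trans hL; rewrite divr_gt0.
have M0 : 0 < M.
  have : 0 < M / (4 * L) by apply: lt_le_trans dM.
  by rewrite pmulr_lgt0 // invr_gt0 mulr_gt0.
have dM2 : delta * (4 * L) <= M by rewrite -ler_pdivlMr // mulr_gt0.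
have MM' : M <= M'.
  apply: maxx_le; last exact: maxx_ge0.
  by move=> j; apply: le_trans (h1 j) (maxx_ge _ _).
have M'M : M' <= M + delta.
  apply: maxx_le; last by rewrite addr_ge0 // ltW.
  by move=> j; apply: le_trans (h2 j) _; rewrite lerD2r maxx_ge.
have M'0 : 0 < M' by apply: lt_le_trans MM'.
have M'2 : M' <= 2 * M by nra.
pose a := 2 * L / M; pose a' := 2 * L / M'.
have a0 : 0 < a by rewrite /a divr_gt0 // mulr_gt0.
have a'0 : 0 < a' by rewrite /a' divr_gt0 // mulr_gt0.
have aa' : a' <= a.
  rewrite /a /a'; apply: ler_wpM2l; first by rewrite mulr_ge0 // ltW.
  by rewrite lef_pV2 ?posrE.
have a2a' : a <= 2 * a'.
  have -> : 2 * a' = 2 * L / (M' / 2) by rewrite /a'; field; rewrite gt_eqF.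
  rewrite /a; apply: ler_wpM2l; first by rewrite mulr_ge0 // ltW.
  rewrite lef_pV2 ?posrE ?divr_gt0 //; lra.
have Pe := @pmf_avg R p x eps M0 L0.
have Qe := @pmf_avg R p x' eps M'0 L0.
rewrite -/L -/M' in Qe.
have TVb := @TV_le R p (softargmax_pmf eps x) (softargmax_pmf eps x').
apply: le_trans (TVb _ _ _) _.
- by move=> i; rewrite Pe avg_ge0 // ltW.
- by move=> i; rewrite Qe avg_ge0 // ltW.
- under eq_bigr do rewrite Pe; under [X in _ = X]eq_bigr do rewrite Qe.
  by rewrite !avg_sum.
pose B i := 2 * a * delta * avg x a i +
  a^-1 * \int[lebesgue_measure]_(c in `]2 * a', 2 * a]) sm x' i c.
apply: (@le_trans _ _ (\sum_(i < p) B i)).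
  apply: ler_sum => i _; rewrite Pe Qe -/a -/a'.
  have t1 := @avg_term1 R p x x' delta a i p0 a0 (ltW d0) h1 h2.
  have t2 := @avg_term2 R p x' a a' i p0 a'0 aa' a2a'.
  have B0 : 0 <= B i.
    rewrite /B addr_ge0 //; apply: mulr_ge0.
    - by apply: mulr_ge0; [apply: mulr_ge0 => //; exact: ltW | exact: ltW].
    - exact: avg_ge0 (ltW a0).
    - by rewrite invr_ge0 ltW.
    - by apply: Rintegral_ge0 => c _; exact: sm_ge0.
  have [le|lt] := leP (avg x a i) (avg x' a' i); first by rewrite subrr.
  by have := lerD t1 t2; rewrite addrA subrK.
rewrite big_split /= -mulr_sumr avg_sum // mulr1 sumI2 //.
have -> : a^-1 * (2 * a - 2 * a') = 2 * ((M' - M) / M').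
  by rewrite /a /a'; field; rewrite ?gt_eqF.
have -> : 2 * a * delta = 4 * L * (delta / M) by rewrite /a; ring.
have -> : 10 * L * delta / M = 10 * L * (delta / M) by ring.
have hq : (M' - M) / M' <= delta / M.
  apply: ler_pM.
  - by rewrite subr_ge0.
  - by rewrite invr_ge0; exact: ltW.
  - by rewrite lerBlDl.
  - by rewrite lef_pV2 ?posrE.
have dq : 0 <= delta / M by rewrite divr_ge0 ?ltW.
nra.
Qed.
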